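(* Let $S\neq\mathbb N$ be a numerical semigroup with cyclotomic exponent sequence $\mathbf e$. Then every $d\in\mathcal E(S)$ satisfies $\mathfrak d(d)\ge2$. Moreover, if $\alpha$ is a minimal element of $(\mathcal E(S),\le_S)$, then $e_\alpha=\mathfrak d(\alpha)-1$.
   Context: A numerical semigroup $S$ is a submonoid of $(\mathbb N,+)$ with finite complement, with minimal generating set $A=\{n_1,\dots,n_e\}$. The cyclotomic exponent sequence is the unique integer sequence $(e_j)_{j\ge1}$ with $(1-x)\sum_{s\in S}x^s=\prod_{j\ge1}(1-x^j)^{e_j}$ in $\mathbb Z[[x]]$; $\mathcal E(S)=\{d\in\mathbb N: d\ge2,\ e_d\ne0,\ d\notin A\}$. Write $a\le_S b$ if $b-a\in S$. With $\varphi:\mathbb N^e\to S$, $\varphi(a)=\sum_ia_in_i$, the denumerant of $s\in S$ is $\mathfrak d(s)=|\varphi^{-1}(s)|$, the number of factorizations of $s$. *)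

(* Defs.v *)
From mathcomp Require Import all_boot all_order all_algebra.
Set Implicit Arguments. Unset Strict Implicit. Unset Printing Implicit Defensive.
Import GRing.Theory Num.Theory.
Local Open Scope ring_scope.

Definition numerical_semigroup (S : pred nat) : Prop :=
  [/\ S 0%N,
      (forall a b, S a -> S b -> S (a + b)%N) &
      exists N : nat, forall n, (N <= n)%N -> S n].

Definition nat_comb (A : seq nat) (s : nat) : Prop :=
  exists c : nat -> nat, s = (\sum_(i < size A) c i * nth 0%N A i)%N.

Definition generates (A : seq nat) (S : pred nat) : Prop :=
  forall s, S s <-> nat_comb A s.

Definition min_gen_set (S : pred nat) (A : seq nat) : Prop :=
  [/\ uniq A, generates A S &
      forall B : seq nat, {subset B <= A} -> generates B S -> {subset A <= B}].

(* Denumerant of s w.r.t. the generators A = (n_1,...,n_e): the number of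
   a in N^e with sum_i a_i n_i = s.  Since every n_i >= 1 (0 is never a
   minimal generator), each such a_i is <= s, so the set of factorizations
   is exactly the following finite set. *)
Definition denumerant (A : seq nat) (s : nat) : nat :=
  #|[set a : {ffun 'I_(size A) -> 'I_s.+1}
       | (\sum_(i < size A) (a i : nat) * nth 0%N A i)%N == s]|.

Definition ps := nat -> int.
Definition ps1 : ps := fun n => ((n == 0%N) : nat)%:Z.
Definition psmul (f g : ps) : ps :=
  fun n => \sum_(i < n.+1) f i * g (n - i)%N.
Definition pspow (f : ps) (m : nat) : ps := iter m (psmul f) ps1.
Definition one_minus_xpow (j : nat) : ps :=
  fun n => ((n == 0%N) : nat)%:Z - ((n == j) : nat)%:Z.
(* (1 - x^j)^{-1} = sum_k x^{jk}  (for j >= 1) *)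
Definition geom_xpow (j : nat) : ps :=
  fun n => ((j %| n)%N : nat)%:Z.
(* (1 - x^j)^e for e in Z, j >= 1 *)
Definition cyc_factor (j : nat) (e : int) : ps :=
  match e with
  | Posz m => pspow (one_minus_xpow j) m
  | Negz m => pspow (geom_xpow j) m.+1
  end.
(* Coefficients of the (x-adically convergent) infinite product
   prod_{j>=1} (1 - x^j)^{e_j}: the factors with j > n are = 1 mod x^{n+1},
   so the n-th coefficient is that of the finite product over 1 <= j <= n. *)
Definition cyc_product (e : nat -> int) : ps :=
  fun n => (\big[psmul/ps1]_(1 <= j < n.+1) cyc_factor j (e j)) n.

Definition hilb (S : pred nat) : ps := fun n => (S n : nat)%:Z.

(* e is the cyclotomic exponent sequence of S (e 0 is irrelevant):
   (1 - x) * sum_{s in S} x^s = prod_{j>=1} (1 - x^j)^{e_j} in Z[[x]]. *)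
Definition cyc_exp_seq (S : pred nat) (e : nat -> int) : Prop :=
  forall n, psmul (one_minus_xpow 1) (hilb S) n = cyc_product e n.

Definition in_E (A : seq nat) (e : nat -> int) (d : nat) : Prop :=
  [/\ (2 <= d)%N, e d != 0 & d \notin A].

Definition leS (S : pred nat) (a b : nat) : Prop := (a <= b)%N /\ S (b - a)%N.

Definition minimal_in_E (S : pred nat) (A : seq nat) (e : nat -> int) (x : nat) : Prop :=
  in_E A e x /\ forall y, in_E A e y -> leS S y x -> y = x.

(* Main.v *)
Require Import Defs.
From mathcomp Require Import all_boot all_order all_algebra.
From mathcomp Require Import zify ring.
From Stdlib Require Import Classical.
Import GRing.Theory Num.Theory.
Set Implicit Arguments. Unset Strict Implicit.
Local Open Scope ring_scope.

Definition tp (N : nat) (p : {poly int}) : {poly int} := \poly_(i < N.+1) p`_i.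

Lemma coef_tp N p i : (tp N p)`_i = if (i <= N)%N then p`_i else 0.
Proof. by rewrite /tp coef_poly ltnS. Qed.

Lemma tpP N p q : tp N p = tp N q <-> forall i, (i <= N)%N -> p`_i = q`_i.
Proof.
split=> [H i Hi|H]; first by have := congr1 (fun r : {poly int} => r`_i) H; rewrite !coef_tp Hi.
apply/polyP=> i; rewrite !coef_tp; case: ifP => // /H -> //.
Qed.

Lemma tp_mull N p q : tp N (tp N p * q) = tp N (p * q).
Proof.
apply/tpP => i Hi; rewrite !coefM; apply: eq_bigr => j _; rewrite coef_tp.
have Hj := ltn_ord j; rewrite ifT //; lia.
Qed.

Lemma tp_mulr N p q : tp N (p * tp N q) = tp N (p * q).
Proof. by rewrite mulrC tp_mull mulrC. Qed.

Lemma tp_tp N p : tp N (tp N p) = tp N p.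
Proof. by apply/tpP => i Hi; rewrite coef_tp Hi. Qed.

Lemma tp_mulE N p q p' q' : tp N p = tp N p' -> tp N q = tp N q' ->
  tp N (p * q) = tp N (p' * q').
Proof. by move=> Hp Hq; rewrite -tp_mull Hp tp_mull -tp_mulr Hq tp_mulr. Qed.

Lemma tp_mul1 N p q : tp N q = 1 -> tp N (p * q) = tp N p.
Proof. by move=> H; rewrite -tp_mulr H mulr1. Qed.

Lemma tp_le N M p q : (M <= N)%N -> tp N p = tp N q -> tp M p = tp M q.
Proof. move=> HM /tpP H; apply/tpP => i Hi; apply: H; lia. Qed.

Lemma tp1 N : tp N 1 = 1.
Proof. by apply/polyP=> i; rewrite coef_tp coef1; case: ifP => //; case: i. Qed.

Lemma tp_prod1 N (I : Type) (r : seq I) (P : pred I) (F : I -> {poly int}) :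
  (forall i, P i -> tp N (F i) = 1) -> tp N (\prod_(i <- r | P i) F i) = 1.
Proof.
move=> H; elim/big_rec: _ => [|i x Pi IH]; first exact: tp1.
by rewrite -tp_mull H // mul1r.
Qed.

Lemma tp_prodE N (I : Type) (r : seq I) (P : pred I) (F G : I -> {poly int}) :
  (forall i, P i -> tp N (F i) = tp N (G i)) ->
  tp N (\prod_(i <- r | P i) F i) = tp N (\prod_(i <- r | P i) G i).
Proof.
move=> H; elim/big_rec2: _ => [//|i x y Pi IH].
by apply: tp_mulE => //; apply: H.
Qed.

Definition supp N (P : nat -> Prop) (p : {poly int}) :=
  forall i, (i <= N)%N -> p`_i != 0 -> P i.

Definition addclosed (P : nat -> Prop) := forall m n, P m -> P n -> P (m + n)%N.

Lemma supp_mul N P p q : addclosed P -> supp N P p -> supp N P q -> supp N P (p * q).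
Proof.
move=> HP Hp Hq i Hi; rewrite coefM => Hs; apply: NNPP => nPi.
move/eqP: Hs; apply; apply: big1 => j _.
have Hj := ltn_ord j.
case: (eqVneq (p`_j) 0) => [->|H1]; first by rewrite mul0r.
case: (eqVneq (q`_(i - j)) 0) => [->|H2]; first by rewrite mulr0.
exfalso; apply: nPi.
have Hj1 : (j <= N)%N by lia.
have Hj2 : (i - j <= N)%N by lia.
have := HP _ _ (Hp _ Hj1 H1) (Hq _ Hj2 H2).
by rewrite subnKC // -ltnS.
Qed.

Lemma supp1 N (P : nat -> Prop) : P 0%N -> supp N P 1.
Proof. by move=> H0 i _; rewrite coef1; case: i. Qed.

Lemma supp_prod N (P : nat -> Prop) (I : Type) (r : seq I) (Q : pred I) F :
  P 0%N -> addclosed P -> (forall i, Q i -> supp N P (F i)) ->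
  supp N P (\prod_(i <- r | Q i) F i).
Proof.
move=> H0 HP HF; elim/big_rec: _ => [|i x Qi IH]; first exact: supp1.
by apply: supp_mul => //; apply: HF.
Qed.

Lemma supp_exp N (P : nat -> Prop) p m :
  P 0%N -> addclosed P -> supp N P p -> supp N P (p ^+ m).
Proof.
move=> H0 HP Hp; elim: m => [|m IH]; first exact: supp1.
by rewrite exprS; apply: supp_mul.
Qed.

Lemma supp_tp N P p : supp N P (tp N p) <-> supp N P p.
Proof.
split=> H i Hi; have := H i Hi; rewrite coef_tp Hi //.
Qed.

Lemma supp_tpE N P p q : tp N p = tp N q -> supp N P p -> supp N P q.
Proof. by move=> E /supp_tp; rewrite E => /supp_tp. Qed.

Lemma supp_le N M P p : (M <= N)%N -> supp N P p -> supp M P p.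
Proof. move=> HM H i Hi; apply: H; lia. Qed.

Lemma supp_imp N (P Q : nat -> Prop) p : (forall i, P i -> Q i) -> supp N P p -> supp N Q p.
Proof. by move=> HPQ H i Hi Hp; apply: HPQ; apply: H. Qed.

Lemma supp0 N P p i : supp N P p -> (i <= N)%N -> ~ P i -> p`_i = 0.
Proof. by move=> H Hi nP; apply/eqP; apply: contraT => /(H _ Hi). Qed.

Lemma coef_mul_gap (p q : {poly int}) j : (0 < j)%N ->
  (forall t, (0 < t < j)%N -> q`_t = 0) ->
  (p * q)`_j = p`_j * q`_0 + p`_0 * q`_j.
Proof.
move=> Hj Hq; rewrite coefM big_ord_recr /= subnn addrC; congr (_ + _).
case: j Hj Hq => // j _ Hq; rewrite big_ord_recl /= subn0 big1 ?addr0 // => i _.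
rewrite Hq ?mulr0 //=; have := ltn_ord i; rewrite /bump leq0n add1n; lia.
Qed.

Lemma coef0_mul (p q : {poly int}) : (p * q)`_0 = p`_0 * q`_0.
Proof. by rewrite coefM big_ord1. Qed.

Definition geomP N (j : nat) : {poly int} := \sum_(v < N.+1) 'X^(v * j).

Lemma coef_geomP N j i : (0 < j)%N -> (i <= N)%N ->
  (geomP N j)`_i = ((j %| i)%N : nat)%:Z.
Proof.
move=> Hj Hi; rewrite /geomP coef_sum.
under eq_bigr => v _ do rewrite coefXn.
case: (boolP (j %| i)%N) => [/dvdnP [k Hk]|nd].
- have Hk' : (k < N.+1)%N.
    have : (k <= k * j)%N by rewrite leq_pmulr.
    lia.
  rewrite (bigD1 (Ordinal Hk')) //= Hk eqxx big1 ?addr0 // => v /negbTE Hv.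
  rewrite eqn_pmul2r //; case: eqP => // E; move: Hv.
  by move/negbT/negP; case; apply/eqP/val_inj; rewrite /= E.
- apply: big1 => v _; case: eqP => // E; case/negP: nd; rewrite E.
  exact: dvdn_mull.
Qed.

Lemma geom_inv N j : (0 < j)%N -> tp N ((1 - 'X^j) * geomP N j) = 1.
Proof.
move=> Hj; apply/polyP => i; rewrite coef_tp coef1.
case: ifP => Hi; last by case: i Hi.
rewrite mulrBl mul1r coefB mulrC coefMXn coef_geomP //.
case: ltnP => Hij.
- rewrite subr0; case: i Hi Hij => [|i] Hi Hij; first by rewrite dvdn0.
  by rewrite gtnNdvd.
- rewrite coef_geomP ?dvdn_subl //; last by lia.
  by rewrite subrr; case: i Hi Hij => //; rewrite leqn0 => _ /eqP E; move: Hj; rewrite E.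
Qed.

Definition pw N j (k : int) : {poly int} :=
  match k with Posz m => (1 - 'X^j) ^+ m | Negz m => geomP N j ^+ m.+1 end.

Lemma pw0 N j : pw N j 0 = 1.
Proof. by []. Qed.

Lemma pw_ug N j a b : (0 < j)%N ->
  tp N ((1 - 'X^j) ^+ a * geomP N j ^+ b) = tp N (pw N j (Posz a - Posz b)).
Proof.
move=> Hj; elim: b a => [|b IH] [|a].
- by rewrite !expr0 mulr1.
- by rewrite expr0 mulr1 subr0.
- by rewrite expr0 mul1r sub0r.
- have -> : (1 - 'X^j) ^+ a.+1 * geomP N j ^+ b.+1 =
     ((1 - 'X^j) ^+ a * geomP N j ^+ b) * ((1 - 'X^j) * geomP N j).
    by rewrite !exprS; ring.
  rewrite tp_mul1 ?geom_inv // IH; congr (tp N (pw N j _)); lia.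
Qed.

Lemma pw_repr N j k : exists a b,
  pw N j k = (1 - 'X^j) ^+ a * geomP N j ^+ b /\ k = Posz a - Posz b.
Proof.
case: k => m; first by exists m, 0%N; rewrite expr0 mulr1 subr0.
by exists 0%N, m.+1; rewrite expr0 mul1r sub0r NegzE.
Qed.

Lemma pw_add N j k1 k2 : (0 < j)%N ->
  tp N (pw N j k1 * pw N j k2) = tp N (pw N j (k1 + k2)).
Proof.
move=> Hj; have [a1 [b1 [-> ->]]] := pw_repr N j k1.
have [a2 [b2 [-> ->]]] := pw_repr N j k2.
have -> : (1 - 'X^j) ^+ a1 * geomP N j ^+ b1 * ((1 - 'X^j) ^+ a2 * geomP N j ^+ b2)
   = (1 - 'X^j) ^+ (a1 + a2) * geomP N j ^+ (b1 + b2) by rewrite !exprD; ring.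
rewrite pw_ug //; congr (tp N (pw N j _)); lia.
Qed.

Lemma pw_inv N j k : (0 < j)%N -> tp N (pw N j k * pw N j (- k)) = 1.
Proof. by move=> Hj; rewrite pw_add // subrr pw0 tp1. Qed.

Definition dvdP j := fun i : nat => (j %| i)%N : Prop.

Lemma dvdP_add j : addclosed (dvdP j).
Proof. by move=> m n; rewrite /dvdP; apply: dvdn_add. Qed.

Lemma supp_u N j : supp N (dvdP j) (1 - 'X^j).
Proof.
move=> i _; rewrite coefB coef1 coefXn /dvdP.
case: (eqVneq i 0%N) => [->|H0]; first by rewrite dvdn0.
case: (eqVneq i j) => [->|Hij]; first by rewrite dvdnn.
by rewrite subrr eqxx.
Qed.

Lemma supp_g M N j : supp M (dvdP j) (geomP N j).
Proof.
move=> i _; rewrite /geomP coef_sum /dvdP => H; apply: NNPP => nd; move/eqP: H; apply.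
apply: big1 => v _; rewrite coefXn; case: eqP => // E; case: nd; rewrite E.
exact: dvdn_mull.
Qed.

Lemma supp_pw M N j k : supp M (dvdP j) (pw N j k).
Proof.
have [a [b [-> _]]] := pw_repr N j k.
apply: supp_mul; first exact: dvdP_add.
- by apply: supp_exp; [exact: dvdn0 | exact: dvdP_add | exact: supp_u].
- by apply: supp_exp; [exact: dvdn0 | exact: dvdP_add | exact: supp_g].
Qed.

Lemma gap_dvd N j (p : {poly int}) : (j <= N)%N -> supp N (dvdP j) p ->
  forall t, (0 < t < j)%N -> p`_t = 0.
Proof.
move=> HjN Hp t Ht; apply: (supp0 Hp); first by lia.
rewrite /dvdP => /dvdn_leq; lia.
Qed.

Lemma coefj_mul N j (p q : {poly int}) : (0 < j)%N -> (j <= N)%N ->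
  supp N (dvdP j) q -> (p * q)`_j = p`_j * q`_0 + p`_0 * q`_j.
Proof. by move=> Hj HjN Hq; apply: coef_mul_gap => //; apply: gap_dvd Hq. Qed.

Lemma coef_u_exp N j a : (0 < j)%N -> (j <= N)%N ->
  ((1 - 'X^j : {poly int}) ^+ a)`_0 = 1 /\ ((1 - 'X^j : {poly int}) ^+ a)`_j = - (Posz a).
Proof.
move=> Hj HjN; elim: a => [|a [IH0 IHj]]; first by rewrite expr0 !coef1 /= (eqn0Ngt j) Hj.
rewrite exprSr coef0_mul (coefj_mul _ Hj HjN (@supp_u N j)) IH0 IHj.
have u0 : (1 - 'X^j : {poly int})`_0 = 1.
  by rewrite coefB coef1 coefXn; case: (j) Hj => [//|j'] _; rewrite subr0.
have uj : (1 - 'X^j : {poly int})`_j = -1.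
  by rewrite coefB coef1 coefXn eqxx; case: (j) Hj => [//|j'] _; rewrite sub0r.
rewrite u0 uj; split; [by rewrite mulr1 | lia].
Qed.

Lemma coef_g_exp N j b : (0 < j)%N -> (j <= N)%N ->
  (geomP N j ^+ b)`_0 = 1 /\ (geomP N j ^+ b)`_j = Posz b.
Proof.
move=> Hj HjN; elim: b => [|b [IH0 IHj]]; first by rewrite expr0 !coef1 /= (eqn0Ngt j) Hj.
rewrite exprSr coef0_mul (coefj_mul _ Hj HjN (@supp_g N N j)) IH0 IHj.
rewrite !coef_geomP // dvdn0 dvdnn; split => //; lia.
Qed.

Lemma coef_pw N j k : (0 < j)%N -> (j <= N)%N ->
  (pw N j k)`_0 = 1 /\ (pw N j k)`_j = - k.
Proof.
move=> Hj HjN; have [a [b [-> ->]]] := pw_repr N j k.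
have [u0 uj] := @coef_u_exp N j a Hj HjN; have [g0 gj] := @coef_g_exp N j b Hj HjN.
rewrite coef0_mul (coefj_mul _ Hj HjN) ?u0 ?uj ?g0 ?gj; last first.
  by apply: supp_exp; [exact: dvdn0 | exact: dvdP_add | exact: (@supp_g N N j)].
split => //; lia.
Qed.

Lemma coef0_exp (p : {poly int}) n : p`_0 = 1 -> (p ^+ n)`_0 = 1.
Proof.
move=> H; elim: n => [|n IH]; first by rewrite expr0 coef1.
by rewrite exprS coef0_mul H IH mulr1.
Qed.

Lemma coef0_pw N j k : (0 < j)%N -> (pw N j k)`_0 = 1.
Proof.
move=> Hj; have [a [b [-> _]]] := pw_repr N j k.
have u0 : (1 - 'X^j : {poly int})`_0 = 1.
  by rewrite coefB coef1 coefXn; case: (j) Hj => [//|j'] _; rewrite subr0.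
have g0 : (geomP N j)`_0 = 1 by rewrite coef_geomP // dvdn0.
by rewrite coef0_mul !coef0_exp // mulr1.
Qed.

Definition tr N (f : ps) : {poly int} := \poly_(i < N.+1) f i.

Lemma coef_tr N f i : (tr N f)`_i = if (i <= N)%N then f i else 0.
Proof. by rewrite /tr coef_poly ltnS. Qed.

Lemma psmul_coef N (f g : ps) (P : {poly int}) n : (n <= N)%N ->
  (forall i, (i <= N)%N -> g i = P`_i) -> psmul f g n = (tr N f * P)`_n.
Proof.
move=> Hn HP; rewrite /psmul coefM; apply: eq_bigr => j _.
have Hj := ltn_ord j; rewrite coef_tr ifT ?HP //; lia.
Qed.

Lemma bigpsmul N (r : seq nat) (F : nat -> ps) n : (n <= N)%N ->
  (\big[psmul/ps1]_(j <- r) F j) n = (\prod_(j <- r) tr N (F j))`_n.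
Proof.
elim: r n => [|x r IH] n Hn; first by rewrite !big_nil /ps1 coef1 natz.
rewrite !big_cons; apply: psmul_coef => // i Hi; exact: IH.
Qed.

Lemma pspow_coef N f m n : (n <= N)%N -> pspow f m n = ((tr N f) ^+ m)`_n.
Proof.
elim: m n => [|m IH] n Hn; first by rewrite expr0 coef1 /pspow /= /ps1 natz.
rewrite exprS /pspow iterS; apply: psmul_coef => // i Hi; exact: IH.
Qed.

Lemma tp_exp N p q m : tp N p = tp N q -> tp N (p ^+ m) = tp N (q ^+ m).
Proof.
move=> H; elim: m => [|m IH]; first by rewrite !expr0.
by rewrite !exprS; apply: tp_mulE.
Qed.

Lemma cyc_pw N j k n : (0 < j)%N -> (n <= N)%N -> cyc_factor j k n = (pw N j k)`_n.
Proof.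
move=> Hj Hn; case: k => m; rewrite /cyc_factor (pspow_coef _ _ Hn).
- have : tp N (tr N (one_minus_xpow j)) = tp N (1 - 'X^j).
    apply/tpP => i Hi; rewrite coef_tr Hi coefB coef1 coefXn /one_minus_xpow.
    by rewrite !natz.
  move/(tp_exp m)/tpP; apply; exact: Hn.
- have : tp N (tr N (geom_xpow j)) = tp N (geomP N j).
    by apply/tpP => i Hi; rewrite coef_tr Hi coef_geomP.
  move/(tp_exp m.+1)/tpP; apply; exact: Hn.
Qed.

Lemma tp_pw_le n N j k : (0 < j)%N -> (n <= N)%N -> tp n (pw n j k) = tp n (pw N j k).
Proof.
move=> Hj HnN; apply/tpP => i Hi; rewrite -(@cyc_pw n j k i Hj Hi) (@cyc_pw N j k i Hj) //; lia.
Qed.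

Lemma tp_pw_big n N j k : (n < j)%N -> tp n (pw N j k) = 1.
Proof.
move=> Hnj; apply/polyP => i; rewrite coef_tp coef1.
case: ifP => Hi; last by case: i Hi.
case: i Hi => [|i] Hi; first by rewrite coef0_pw //; lia.
rewrite /=; apply: (supp0 (@supp_pw n N j k)) => //.
rewrite /dvdP => /dvdn_leq; lia.
Qed.

Lemma tp_prodE_nat N a b (F G : nat -> {poly int}) :
  (forall i, (a <= i < b)%N -> tp N (F i) = tp N (G i)) ->
  tp N (\prod_(a <= i < b) F i) = tp N (\prod_(a <= i < b) G i).
Proof.
move=> H; rewrite big_nat_cond [X in _ = tp N X]big_nat_cond.
by apply: tp_prodE => i /andP [Hi _]; apply: H.
Qed.

Lemma tp_prod1_nat N a b (F : nat -> {poly int}) :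
  (forall i, (a <= i < b)%N -> tp N (F i) = 1) ->
  tp N (\prod_(a <= i < b) F i) = 1.
Proof.
move=> H; rewrite big_nat_cond.
by apply: tp_prod1 => i /andP [Hi _]; apply: H.
Qed.

Lemma cyc_main S e N : cyc_exp_seq S e ->
  tp N ((1 - 'X^1) * tr N (hilb S)) = tp N (\prod_(1 <= j < N.+1) pw N j (e j)).
Proof.
move=> He; apply/tpP => n Hn.
have E0 : tp N (tr N (one_minus_xpow 1)) = tp N (1 - 'X^1).
  apply/tpP => i Hi; rewrite coef_tr Hi coefB coef1 coefXn /one_minus_xpow.
  by rewrite !natz.
have L : ((1 - 'X^1) * tr N (hilb S))`_n = psmul (one_minus_xpow 1) (hilb S) n.
  rewrite (@psmul_coef N _ _ (tr N (hilb S)) n Hn); last first.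
    by move=> i Hi; rewrite coef_tr Hi.
  have := @tp_mulE N _ _ _ (tr N (hilb S)) E0 erefl.
  by move/tpP => ->.
rewrite L He /cyc_product (bigpsmul _ _ (leqnn n)).
have E1 : tp n (\prod_(1 <= j < n.+1) tr n (cyc_factor j (e j))) =
          tp n (\prod_(1 <= j < n.+1) pw N j (e j)).
  apply: tp_prodE_nat => j /andP [Hj _]; apply/tpP => i Hi.
  by rewrite coef_tr Hi (@cyc_pw N) // (leq_trans Hi Hn).
have E2 : tp n (\prod_(1 <= j < N.+1) pw N j (e j)) =
          tp n (\prod_(1 <= j < n.+1) pw N j (e j)).
  rewrite (big_cat_nat (n := n.+1)) //=.
  apply: tp_mul1; apply: tp_prod1_nat => j /andP [Hj _]; apply: tp_pw_big; lia.
move/tpP: E1 => ->//; move/tpP: E2 => ->//.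
Qed.

Definition Dpoly (A : seq nat) N : {poly int} := \prod_(i < size A) geomP N (nth 0%N A i).

Lemma X_sum (I : finType) (F : I -> nat) :
  ('X^(\sum_i F i) : {poly int}) = \prod_i 'X^(F i).
Proof. by apply: (big_morph (fun n => 'X^n)) => [m n|]; rewrite ?exprD ?expr0. Qed.

Lemma den_coef A s : Posz (denumerant A s) = (Dpoly A s)`_s.
Proof.
rewrite /Dpoly /geomP bigA_distr_bigA /= coef_sum.
under eq_bigr => f _ do rewrite -X_sum coefXn.
rewrite -natr_sum /denumerant -sum1dep_card natz; congr Posz.
by rewrite big_mkcond /=; apply: eq_bigr => f _; rewrite eq_sym; case: eqP.
Qed.

Lemma tp_Dpoly A s N : (forall x, x \in A -> 0 < x)%N -> (s <= N)%N ->
  tp s (Dpoly A s) = tp s (Dpoly A N).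
Proof.
move=> Apos HsN; apply: tp_prodE => i _; apply/tpP => n Hn.
have Hi : (0 < nth 0%N A i)%N by apply: Apos; apply: mem_nth.
rewrite !coef_geomP //; lia.
Qed.

Lemma tp_geom_big N x : (N < x)%N -> tp N (geomP N x) = 1.
Proof. by move=> H; have := @tp_pw_big N N x (Negz 0) H; rewrite /pw expr1. Qed.

Lemma Dpoly_range A N : uniq A -> (forall x, x \in A -> 0 < x)%N ->
  tp N (Dpoly A N) = tp N (\prod_(1 <= j < N.+1 | j \in A) geomP N j).
Proof.
move=> uA Apos; rewrite /Dpoly -(big_mkord xpredT (fun i => geomP N (nth 0%N A i))).
rewrite -(big_nth 0%N xpredT (fun x => geomP N x)).
rewrite (bigID (fun x => x <= N)%N) /= tp_mul1; last first.
  by apply: tp_prod1 => x; rewrite -ltnNge; apply: tp_geom_big.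
rewrite -[X in tp N X = _]big_filter -[X in _ = tp N X]big_filter.
congr (tp N _); apply: perm_big; apply: uniq_perm.
- exact: filter_uniq.
- by apply: filter_uniq; apply: iota_uniq.
- move=> x; rewrite !mem_filter mem_index_iota.
  case: (boolP (x \in A)) => xA; last by rewrite andbF.
  by have := Apos x xA; rewrite andbT /=; lia.
Qed.

Definition fN (A : seq nat) (e : nat -> int) (j : nat) : int :=
  e j + Posz (j \in A) - Posz (j == 1%N).

Definition Gp A e N := \prod_(1 <= j < N.+1) pw N j (- fN A e j).

Lemma P1_lem N : tp N (\prod_(1 <= j < N.+1) pw N j (Posz (j == 1%N))) = tp N (1 - 'X^1).
Proof.
case: N => [|N].
  rewrite big_geq //; apply/polyP => i; rewrite !coef_tp.
  case: i => [|i] //=; by rewrite coefB coef1 coefXn.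
rewrite big_ltn // big_nat_cond big1 ?mulr1 /pw ?expr1 // => j /andP [/andP [Hj _] _].
by rewrite (_ : (j == 1%N) = false) //; apply/negbTE; rewrite neq_ltn Hj orbT.
Qed.

Lemma main_rel S A e N : uniq A -> (forall x, x \in A -> 0 < x)%N -> cyc_exp_seq S e ->
  tp N (tr N (hilb S) * Gp A e N) = tp N (Dpoly A N).
Proof.
move=> uA Apos He.
set PE := \prod_(1 <= j < N.+1) pw N j (- e j).
set PA := \prod_(1 <= j < N.+1) pw N j (- Posz (j \in A)).
set P1 := \prod_(1 <= j < N.+1) pw N j (Posz (j == 1%N)).
set PP := \prod_(1 <= j < N.+1) pw N j (e j).
set H := tr N (hilb S).
have E1 : tp N (Gp A e N) = tp N (PE * PA * P1).
  rewrite /PE /PA /P1 -!big_split; apply: tp_prodE_nat => j /andP [Hj _].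
  rewrite -tp_mull pw_add // tp_mull pw_add //; congr (tp N (pw N j _)).
  by rewrite /fN; ring.
have E2 : tp N (PP * PE) = 1.
  by rewrite /PP /PE -big_split /=; apply: tp_prod1_nat => j /andP [Hj _]; apply: pw_inv.
have E3 : tp N PA = tp N (Dpoly A N).
  rewrite Dpoly_range // /PA [X in _ = tp N X]big_mkcond /=; congr (tp N _).
  by apply: eq_bigr => j _; case: (j \in A) => //=.
have E4 : tp N P1 = tp N (1 - 'X^1) by apply: P1_lem.
have E5 := cyc_main N He.
rewrite -/PP -/H in E5.
rewrite -tp_mulr E1 tp_mulr.
have -> : H * (PE * PA * P1) = (P1 * H) * PE * PA by ring.
have F1 : tp N (P1 * H) = tp N PP by rewrite (tp_mulE E4 (erefl (tp N H))).
have F2 : tp N (P1 * H * PE) = tp N 1 by rewrite (tp_mulE F1 (erefl (tp N PE))) E2 tp1.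
rewrite (tp_mulE F2 (erefl (tp N PA))) mul1r.
exact: E3.
Qed.

Definition comb (c : nat -> nat) (l : seq nat) := (\sum_(i < size l) c i * nth 0%N l i)%N.

Lemma comb_ext c1 c2 l : (forall i, (i < size l)%N -> c1 i = c2 i) -> comb c1 l = comb c2 l.
Proof. by move=> H; apply: eq_bigr => i _; rewrite H. Qed.

Lemma comb_cat c l1 l2 :
  comb c (l1 ++ l2) = (comb c l1 + comb (fun i => c (size l1 + i)%N) l2)%N.
Proof.
rewrite /comb size_cat big_split_ord /=; congr (_ + _)%N; apply: eq_bigr => i _.
  by rewrite nth_cat /= ltn_ord.
by rewrite nth_cat /= ltnNge leq_addr /= addKn.
Qed.

Lemma comb_cons c x l : comb c (x :: l) = (c 0%N * x + comb (fun i => c i.+1) l)%N.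
Proof. by rewrite /comb /= big_ord_recl. Qed.

Lemma nat_combE l s : nat_comb l s <-> exists c, s = comb c l.
Proof. by []. Qed.

Lemma combD c1 c2 l : comb (fun i => c1 i + c2 i)%N l = (comb c1 l + comb c2 l)%N.
Proof. by rewrite /comb -big_split /=; apply: eq_bigr => i _; rewrite mulnDl. Qed.

Lemma combM k c l : comb (fun i => k * c i)%N l = (k * comb c l)%N.
Proof. by rewrite /comb big_distrr /=; apply: eq_bigr => i _; rewrite mulnA. Qed.

Lemma comb0 l : comb (fun _ => 0%N) l = 0%N.
Proof. by rewrite /comb big1. Qed.

Definition dropc (n : nat) (d : nat -> nat) := fun i => if (i < n)%N then d i else d i.+1.
Definition insc (n : nat) (c : nat -> nat) :=
  fun i => if (i < n)%N then c i else if i == n then 0%N else c i.-1.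

Lemma split_comb d l1 x l2 :
  comb d (l1 ++ x :: l2) = (comb (dropc (size l1) d) (l1 ++ l2) + d (size l1) * x)%N.
Proof.
rewrite !comb_cat comb_cons addn0.
rewrite (@comb_ext (dropc (size l1) d) d l1); last by move=> i Hi; rewrite /dropc Hi.
rewrite (@comb_ext (fun i => dropc (size l1) d (size l1 + i)) (fun i => d (size l1 + i).+1) l2).
  by rewrite (@comb_ext (fun i => d (size l1 + i.+1)%N) (fun i => d (size l1 + i).+1) l2) //;
     [lia | move=> i _; rewrite addnS].
by move=> i _; rewrite /dropc ltnNge leq_addr.
Qed.

Lemma dropc_insc n c i : dropc n (insc n c) i = c i.
Proof.
rewrite /dropc /insc; case: ltnP => H //.
by rewrite ifN; [rewrite ifN //; lia | lia].
Qed.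

Section Gens.
Variable S : pred nat.
Variable A : seq nat.
Hypothesis HS : numerical_semigroup S.
Hypothesis HA : min_gen_set S A.

Lemma S0 : S 0%N. Proof. by case: HS. Qed.
Lemma Sadd m n : S m -> S n -> S (m + n)%N. Proof. by case: HS => _ H _; apply: H. Qed.
Lemma Smul k n : S n -> S (k * n)%N.
Proof. by move=> Hn; elim: k => [|k IH]; [exact: S0 | rewrite mulSn; apply: Sadd]. Qed.

Lemma gen_iff s : S s <-> exists c, s = comb c A.
Proof. by case: HA => _ H _; apply: H. Qed.

Lemma A_uniq : uniq A. Proof. by case: HA. Qed.

Lemma no_redundant l1 x l2 : A = l1 ++ x :: l2 ->
  (exists c, x = comb c (l1 ++ l2)) -> False.
Proof.
move=> EA [cx Hx]; case: HA => uA Hgen Hmin.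
have Hsub : {subset l1 ++ l2 <= A}.
  by move=> y; rewrite EA !mem_cat inE => /orP [->|->]; rewrite ?orbT.
have Hg : generates (l1 ++ l2) S.
  move=> s; split.
  - case/Hgen/nat_combE => d ->; apply/nat_combE; rewrite EA split_comb Hx.
    by exists (fun i => dropc (size l1) d i + d (size l1) * cx i)%N; rewrite combD combM.
  - case/nat_combE=> c ->; apply/Hgen/nat_combE; exists (insc (size l1) c); rewrite EA split_comb.
    rewrite /insc eqxx ltnn mul0n addn0; apply: comb_ext => i _.
    by have := dropc_insc (size l1) c i; rewrite /insc.
have := Hmin _ Hsub Hg x; rewrite EA mem_cat inE eqxx orbT => /(_ isT).
move: uA; rewrite EA cat_uniq /= => /and3P [_ H1 /andP [H2 _]].
rewrite mem_cat => /orP [Hx1|Hx2]; last by rewrite Hx2 in H2.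
by rewrite Hx1 in H1.
Qed.

Lemma A_split x : x \in A -> exists l1 l2, A = l1 ++ x :: l2.
Proof. by case/splitPr => l1 l2; exists l1, l2. Qed.

Lemma A_pos x : x \in A -> (0 < x)%N.
Proof.
move=> xA; rewrite lt0n; apply/negP => /eqP x0; subst x.
have [l1 [l2 EA]] := A_split xA.
by apply: (no_redundant EA); exists (fun _ => 0%N); rewrite comb0.
Qed.

Lemma A_inS x : x \in A -> S x.
Proof.
move=> xA; have [l1 [l2 EA]] := A_split xA; apply/gen_iff.
exists (fun i => (i == size l1 : nat)); rewrite EA split_comb eqxx mul1n.
rewrite (@comb_ext _ (fun _ => 0%N)) ?comb0 // => i _.
rewrite /dropc; case: ltnP => H.
  by rewrite (_ : (i == size l1) = false) //; apply/negbTE/eqP => E; rewrite E ltnn in H.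
by rewrite (_ : (i.+1 == size l1) = false) //; apply/negbTE/eqP => E; rewrite -E ltnn in H.
Qed.

Lemma comb_small l1 x l2 s : A = l1 ++ x :: l2 -> S s -> (s < x)%N ->
  exists c, s = comb c (l1 ++ l2).
Proof.
move=> EA /gen_iff [d Hd] Hsx; exists (dropc (size l1) d).
move: Hd Hsx; rewrite EA split_comb => ->.
case: (d (size l1)) => [|k]; first by rewrite mul0n addn0.
rewrite mulSn; lia.
Qed.

Lemma A_atom x s t : x \in A -> S s -> S t -> (0 < s)%N -> (0 < t)%N -> x = (s + t)%N -> False.
Proof.
move=> xA Ss St s0 t0 Ex; have [l1 [l2 EA]] := A_split xA.
have [c1 H1] := comb_small EA Ss (ltac:(lia)).
have [c2 H2] := comb_small EA St (ltac:(lia)).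
by apply: (no_redundant EA); exists (fun i => c1 i + c2 i)%N; rewrite combD -H1 -H2.
Qed.

Lemma S1 : (exists n, ~~ S n) -> ~ S 1%N.
Proof.
move=> [n Hn] S1; case/negP: Hn; elim: n => [|n IH]; first exact: S0.
by rewrite -addn1; apply: Sadd.
Qed.

End Gens.

Section Den.
Variable S : pred nat.
Variable A : seq nat.
Hypothesis HS : numerical_semigroup S.
Hypothesis HA : min_gen_set S A.

Lemma term_le (c : nat -> nat) (i : 'I_(size A)) : (c i <= comb c A)%N.
Proof.
rewrite /comb (bigD1 i) //=; apply: leq_trans (leq_addr _ _).
by apply: leq_pmulr; apply: (A_pos HA); apply: mem_nth.
Qed.

Lemma den_pos n : S n -> (0 < denumerant A n)%N.
Proof.
case/(gen_iff HA) => c En.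
pose f : {ffun 'I_(size A) -> 'I_n.+1} := [ffun i : 'I_(size A) => inord (c i)].
apply/card_gt0P; exists f; rewrite inE; apply/eqP.
apply: (etrans _ (esym En)); apply: eq_bigr => i _; rewrite ffunE inordK // ltnS.
by have := term_le c i; rewrite -En.
Qed.

Lemma den_mono n r : S r -> (denumerant A n <= denumerant A (n + r))%N.
Proof.
case/(gen_iff HA) => c Er.
pose phi (f : {ffun 'I_(size A) -> 'I_n.+1}) : {ffun 'I_(size A) -> 'I_(n + r).+1} :=
  [ffun i : 'I_(size A) => inord (f i + c i)].
have Hle : forall (f : {ffun 'I_(size A) -> 'I_n.+1}) i, (f i + c i < (n + r).+1)%N.
  move=> f i; have := ltn_ord (f i); have := term_le c i; rewrite -Er; lia.
have inj : injective phi.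
  move=> f1 f2 E; apply/ffunP => i; have := congr1 (fun g : {ffun 'I_(size A) -> 'I_(n + r).+1} => val (g i)) E.
  rewrite /phi !ffunE /= !inordK ?Hle // => /eqP; rewrite eqn_add2r => /eqP H.
  exact: val_inj.
rewrite /denumerant -(card_imset _ inj); apply: subset_leq_card; apply/subsetP => g.
case/imsetP => f; rewrite inE => /eqP Hf ->; rewrite inE; apply/eqP.
rewrite /phi; under eq_bigr => i _ do rewrite ffunE inordK ?Hle // mulnDl.
by rewrite big_split /= Hf Er.
Qed.

End Den.

Lemma coef_mul_ends (p q : {poly int}) n : (0 < n)%N ->
  (forall k, (0 < k < n)%N -> p`_k * q`_(n - k) = 0) ->
  (p * q)`_n = p`_n * q`_0 + p`_0 * q`_n.
Proof.
move=> Hn Hm; rewrite coefM big_ord_recr /= subnn addrC; congr (_ + _).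
case: n Hn Hm => // n _ Hm; rewrite big_ord_recl /= subn0 big1 ?addr0 // => i _.
have Hb : bump 0 i = i.+1 by []. rewrite Hb; apply: Hm; have := ltn_ord i; lia.
Qed.

Lemma coef0_prod_pw N (r : seq nat) (P : pred nat) k :
  (forall j, P j -> 0 < j)%N -> (\prod_(j <- r | P j) pw N j (k j))`_0 = 1.
Proof.
move=> HP; rewrite coef0_prod big1 // => j Pj; exact: coef0_pw (HP _ Pj).
Qed.

Section Core.
Variable S : pred nat.
Variable A : seq nat.
Variable e : nat -> int.
Hypothesis HS : numerical_semigroup S.
Hypothesis HnN : exists n, ~~ S n.
Hypothesis HA : min_gen_set S A.
Hypothesis He : cyc_exp_seq S e.

Definition Gen (J : nat -> Prop) (n : nat) : Prop :=
  n = 0%N \/ exists j, [/\ J j, (0 < j <= n)%N & S (n - j)%N].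

Lemma Gen_S J n : (forall j, J j -> S j) -> Gen J n -> S n.
Proof.
move=> HJ [->|[j [Jj Hj Snj]]]; first exact: (S0 HS).
by rewrite -(subnKC (proj2 (andP Hj))); apply: (Sadd HS) => //; apply: HJ.
Qed.

Lemma Gen_add J : (forall j, J j -> S j) -> addclosed (Gen J).
Proof.
move=> HJ m n [->|[j [Jj Hj Smj]]] Hn; first by rewrite add0n.
right; exists j; split => //; first by lia.
rewrite -addnBAC; last by case/andP: Hj.
by apply: (Sadd HS) => //; apply: Gen_S Hn.
Qed.

Lemma Gen_dvd J j n : (forall j, J j -> S j) -> J j -> (0 < j)%N -> (j %| n)%N -> Gen J n.
Proof.
move=> HJ Jj Hj /dvdnP [k ->]; case: k => [|k]; first by left.
right; exists j; split => //; first by rewrite Hj /= leq_pmull.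
by rewrite mulSn addKn; apply: (Smul HS); apply: HJ.
Qed.

Lemma supp_quot N (h g : {poly int}) : supp N S h -> h`_0 = 1 ->
  supp N S (h * g) -> supp N S g.
Proof.
move=> Hh h0 Hhg.
suff H : forall n i, (i <= n)%N -> (i <= N)%N -> ~ S i -> g`_i = 0.
  move=> i Hi Hg; apply: NNPP => nSi; move/eqP: Hg; apply; exact: (H i).
elim=> [|n IH] i Hin HiN nSi.
  by move: Hin; rewrite leqn0 => /eqP Ei; case: nSi; rewrite Ei; exact: (S0 HS).
have := supp0 Hhg HiN nSi; rewrite coefM big_ord_recl /= subn0 h0 mul1r.
rewrite big1 ?addr0 // => j _.
have Hb : bump 0 j = j.+1 by [].
have Hj' := ltn_ord j; rewrite Hb.
case: (eqVneq (h`_(j.+1)) 0) => [->|Hj]; first by rewrite mul0r.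
have HjN : (j.+1 <= N)%N by lia.
have Sj := Hh _ HjN Hj.
rewrite (IH (i - j.+1)%N) ?mulr0 //; try lia.
move=> Sij; apply: nSi.
have Hji : (j.+1 <= i)%N by lia.
by rewrite -(subnKC Hji); apply: (Sadd HS).
Qed.

Definition hilbP N := tr N (hilb S).

Lemma coef_hilbP N i : (i <= N)%N -> (hilbP N)`_i = Posz (S i).
Proof. by move=> Hi; rewrite /hilbP coef_tr Hi. Qed.

Lemma supp_hilbP N : supp N S (hilbP N).
Proof. by move=> i Hi; rewrite coef_hilbP //; case: (S i). Qed.

Lemma hilbP0 N : (hilbP N)`_0 = 1.
Proof. by rewrite coef_hilbP // (S0 HS). Qed.

Lemma Apos' x : x \in A -> (0 < x)%N.
Proof. exact: (A_pos HA). Qed.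

Lemma supp_D N : supp N S (Dpoly A N).
Proof.
apply: supp_prod; [exact: (S0 HS) | exact: (fun m n => @Sadd S HS m n) |] => i _.
have xA : nth 0%N A i \in A by apply: mem_nth.
apply: (supp_imp _ (@supp_g N N (nth 0%N A i))) => n Hn.
by apply: (@Gen_S (fun j => j = nth 0%N A i)); [move=> j ->; exact: (A_inS HA) |
  apply: (@Gen_dvd _ (nth 0%N A i)) => //; [move=> j ->; exact: (A_inS HA) | exact: Apos']].
Qed.

Lemma rel N : tp N (hilbP N * Gp A e N) = tp N (Dpoly A N).
Proof. by apply: main_rel => //; [exact: A_uniq HA | exact: Apos']. Qed.

Lemma supp_Gp N : supp N S (Gp A e N).
Proof.
apply: (supp_quot (@supp_hilbP N) (hilbP0 N)).
by apply: supp_tpE (@supp_D N); rewrite rel.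
Qed.

Lemma Gp0 N : (Gp A e N)`_0 = 1.
Proof. by rewrite /Gp big_nat_cond coef0_prod_pw // => j /andP [/andP [Hj _] _]. Qed.

Lemma D_atom N a : a \in A -> (a <= N)%N -> (Dpoly A N)`_a = 1.
Proof.
move=> aA HaN; have Ha := Apos' aA.
have Hi0 : (index a A < size A)%N by rewrite index_mem.
pose i0 : 'I_(size A) := Ordinal Hi0.
have Ea : nth 0%N A i0 = a by rewrite nth_index.
rewrite /Dpoly (bigD1 i0) //= Ea mulrC.
set R := \prod_(i < size A | i != i0) _.
have HJ : forall b, (b \in A /\ b != a) -> S b by move=> b [bA _]; exact: (A_inS HA bA).
have suppR : supp N (Gen (fun b => b \in A /\ b != a)) R.
  apply: supp_prod; [by left | exact: Gen_add | ] => i Hi.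
  have iA : nth 0%N A i \in A by apply: mem_nth.
  have Hne : nth 0%N A i != a.
    rewrite -Ea nth_uniq ?(A_uniq HA) //.
  apply: (supp_imp _ (@supp_g N N _)) => n Hn.
  by apply: (@Gen_dvd _ (nth 0%N A i)) => //; exact: Apos'.
rewrite (coefj_mul _ Ha HaN (@supp_g N N a)) !coef_geomP // dvdn0 dvdnn mulr1.
have R0 : R`_0 = 1.
  rewrite /R coef0_prod big1 // => i _; rewrite coef_geomP // ?dvdn0 //.
  by apply: Apos'; apply: mem_nth.
have Ra : R`_a = 0.
  apply: (supp0 suppR HaN) => [[Ea0|[b [[bA nba] Hb Sab]]]]; first by move: Ha; rewrite Ea0.
  have Hab : (b < a)%N by rewrite ltn_neqAle nba; case/andP: Hb.
  apply: (A_atom HA aA (A_inS HA bA) Sab); try lia.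
by rewrite Ra R0 add0r.
Qed.


Lemma Tok_step j0 : (0 < j0)%N ->
  (forall j, (0 < j)%N -> (j < j0)%N -> fN A e j != 0 -> S j /\ j \notin A) ->
  fN A e j0 != 0 -> S j0 /\ j0 \notin A.
Proof.
move=> Hj0 IH Hf.
set P := \prod_(1 <= j < j0) pw j0 j (- fN A e j).
set Q := pw j0 j0 (- fN A e j0).
have Hsplit : Gp A e j0 = P * Q by rewrite /Gp big_nat_recr.
pose J := fun j => S j /\ j \notin A.
have HJ : forall j, J j -> S j by move=> j [].
have suppP : supp j0 (Gen J) P.
  rewrite /P big_nat_cond; apply: supp_prod; [by left | exact: Gen_add |].
  move=> j /andP [/andP [Hj1 Hjj0] _].
  case: (eqVneq (fN A e j) 0) => [->|Hfj]; first by rewrite oppr0 pw0; apply: supp1; left.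
  have [Sj jA] := IH j Hj1 Hjj0 Hfj.
  apply: (supp_imp _ (@supp_pw j0 j0 j _)) => n Hn.
  exact: (Gen_dvd HJ (conj Sj jA) Hj1 Hn).
have P0 : P`_0 = 1.
  by rewrite /P big_nat_cond coef0_prod_pw // => j /andP [/andP []].
have [Q0 Qj] := @coef_pw j0 j0 (- fN A e j0) Hj0 (leqnn j0).
have HG : (Gp A e j0)`_j0 = P`_j0 + fN A e j0.
  by rewrite Hsplit (coefj_mul _ Hj0 (leqnn _) (@supp_pw j0 j0 j0 _)) Q0 Qj P0 opprK mulr1 mul1r.
have Sj0 : S j0.
  apply: NNPP => nS.
  have G0 : (Gp A e j0)`_j0 = 0 := supp0 (@supp_Gp j0) (leqnn _) nS.
  have P0' : P`_j0 = 0 := supp0 suppP (leqnn _) (fun g => nS (Gen_S HJ g)).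
  by move: G0; rewrite HG P0' add0r => /eqP; rewrite (negbTE Hf).
split => //; apply/negP => j0A.
have D1 := D_atom j0A (leqnn j0).
have R := rel j0; move/tpP: R => /(_ j0 (leqnn _)); rewrite D1.
rewrite (coef_mul_ends Hj0); last first.
  move=> k /andP [Hk1 Hk2].
  case: (eqVneq ((hilbP j0)`_k) 0) => [->|Hk]; first by rewrite mul0r.
  case: (eqVneq ((Gp A e j0)`_(j0 - k)) 0) => [->|Hk']; first by rewrite mulr0.
  have Sk := @supp_hilbP j0 k (ltnW Hk2) Hk.
  have Sjk := @supp_Gp j0 (j0 - k)%N (leq_subr _ _) Hk'.
  exfalso; apply: (A_atom HA j0A Sk Sjk Hk1); lia.
rewrite coef_hilbP // Sj0 Gp0 hilbP0 mulr1 mul1r.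
have P0' : P`_j0 = 0.
  apply: (supp0 suppP (leqnn _)) => [[E0|[j [[Sj jA] Hj Sjj]]]]; first by move: Hj0; rewrite E0.
  case: (eqVneq j j0) => [Ej|Hne]; first by rewrite Ej j0A in jA.
  have Hjl : (j < j0)%N by rewrite ltn_neqAle Hne; case/andP: Hj.
  apply: (A_atom HA j0A Sj Sjj); lia.
rewrite HG P0' add0r => E.
have Ef : fN A e j0 = 0 by lia.
by move: Hf; rewrite Ef eqxx.
Qed.

Lemma Tok j : (0 < j)%N -> fN A e j != 0 -> S j /\ j \notin A.
Proof.
move: j; suff H : forall n j, (j <= n)%N -> (0 < j)%N -> fN A e j != 0 -> S j /\ j \notin A.
  by move=> j Hj; apply: (H j).
elim=> [|n IH] j Hjn Hj; first by lia.
apply: Tok_step => // i Hi Hij; apply: IH => //; lia.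
Qed.


Lemma fN_in j : (j \notin A) -> (j != 1%N) -> fN A e j = e j.
Proof. by move=> jA j1; rewrite /fN (negbTE jA) (negbTE j1) addr0 subr0. Qed.

Lemma fN_E j : (0 < j)%N -> fN A e j != 0 -> in_E A e j /\ S j.
Proof.
move=> Hj Hf; have [Sj jA] := Tok Hj Hf.
have j1 : j != 1%N by apply/eqP => E; apply: (S1 HS HnN); rewrite -E.
split => //; split => //; last by rewrite -fN_in.
by rewrite ltn_neqAle eq_sym j1 Hj.
Qed.

Lemma E_fN j : in_E A e j -> fN A e j = e j.
Proof. by case=> H2 _ jA; apply: fN_in => //; apply/eqP => E; move: H2; rewrite E. Qed.

Lemma minimal_val a : minimal_in_E S A e a -> Posz (denumerant A a) = e a + 1 /\ S a.
Proof.
case=> Ea Hmin; have fa := E_fN Ea.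
case: (Ea) => H2 Hea aA.
have Ha : (0 < a)%N by apply: leq_trans H2.
have Hfa : fN A e a != 0 by rewrite fa.
have [_ Sa] := fN_E Ha Hfa.
split => //.
set R := \prod_(1 <= j < a) pw a j (- fN A e j).
set Q := pw a a (- fN A e a).
have Hsplit : Gp A e a = R * Q by rewrite /Gp big_nat_recr.
pose J1 := fun j => (0 < j < a)%N /\ fN A e j != 0.
have HJ1 : forall j, J1 j -> S j by move=> j [/andP [Hj _] Hf]; case: (fN_E Hj Hf).
pose J2 := fun j => (0 < j <= a)%N /\ fN A e j != 0.
have HJ2 : forall j, J2 j -> S j by move=> j [/andP [Hj _] Hf]; case: (fN_E Hj Hf).
have suppR : supp a (Gen J1) R.
  rewrite /R big_nat_cond; apply: supp_prod; [by left | exact: Gen_add |].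
  move=> j /andP [/andP [Hj1 Hja] _].
  case: (eqVneq (fN A e j) 0) => [->|Hfj]; first by rewrite oppr0 pw0; apply: supp1; left.
  apply: (supp_imp _ (@supp_pw a a j _)) => n Hn.
  by apply: (Gen_dvd HJ1 _ Hj1 Hn); split => //; rewrite Hj1.
have suppG : supp a (Gen J2) (Gp A e a).
  rewrite /Gp big_nat_cond; apply: supp_prod; [by left | exact: Gen_add |].
  move=> j /andP [/andP [Hj1 Hja] _].
  case: (eqVneq (fN A e j) 0) => [->|Hfj]; first by rewrite oppr0 pw0; apply: supp1; left.
  apply: (supp_imp _ (@supp_pw a a j _)) => n Hn.
  by apply: (Gen_dvd HJ2 _ Hj1 Hn); split => //; rewrite Hj1.
have R0 : R`_0 = 1.
  by rewrite /R big_nat_cond coef0_prod_pw // => j /andP [/andP []].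
have Ra : R`_a = 0.
  apply: (supp0 suppR (leqnn _)) => [[E0|[j [[/andP [Hj1 Hja] Hfj] Hj Saj]]]].
    by move: Ha; rewrite E0.
  have [Ej _] := fN_E Hj1 Hfj.
  have := Hmin j Ej (conj (ltnW Hja) Saj); move=> E; move: Hja; rewrite E ltnn.
  done.
have [Q0 Qa] := @coef_pw a a (- fN A e a) Ha (leqnn a).
have HG : (Gp A e a)`_a = e a.
  rewrite Hsplit (coefj_mul _ Ha (leqnn _) (@supp_pw a a a _)) Q0 Qa R0 Ra opprK.
  by rewrite mul0r add0r mul1r fa.
have R1 := rel a; move/tpP: R1 => /(_ a (leqnn _)).
rewrite -den_coef (coef_mul_ends Ha); last first.
  move=> k /andP [Hk1 Hk2].
  case: (eqVneq ((hilbP a)`_k) 0) => [->|Hk]; first by rewrite mul0r.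
  case: (eqVneq ((Gp A e a)`_(a - k)) 0) => [->|Hk']; first by rewrite mulr0.
  exfalso.
  have Sk := @supp_hilbP a k (ltnW Hk2) Hk.
  case: (suppG (a - k)%N (leq_subr _ _) Hk') => [E0|[j [[/andP [Hj1 Hja] Hfj] Hj Sakj]]].
    by move: Hk2 E0; lia.
  have [Ej _] := fN_E Hj1 Hfj.
  have Hja' : (j <= a)%N by [].
  have Saj : S (a - j)%N.
    have -> : (a - j = (a - k - j) + k)%N by case/andP: Hj => _ Hj'; lia.
    exact: (Sadd HS).
  have := Hmin j Ej (conj Hja' Saj) => E.
  by case/andP: Hj => _; rewrite E; lia.
rewrite coef_hilbP // Sa Gp0 hilbP0 HG mulr1 mul1r => <-.
by rewrite addrC.
Qed.

End Core.

Lemma leS_trans S a b c : numerical_semigroup S -> leS S a b -> leS S b c -> leS S a c.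
Proof.
move=> HS [Hab Sab] [Hbc Sbc]; split; first exact: leq_trans Hbc.
have -> : (c - a = (c - b) + (b - a))%N by lia.
exact: (Sadd HS).
Qed.

Lemma exists_min S A e d : numerical_semigroup S -> in_E A e d ->
  exists a, minimal_in_E S A e a /\ leS S a d.
Proof.
move=> HS; move: d; suff H : forall n d, (d <= n)%N -> in_E A e d ->
    exists a, minimal_in_E S A e a /\ leS S a d.
  by move=> d; apply: (H d).
elim=> [|n IH] d Hdn Ed.
  by case: Ed => H2; move: Hdn; lia.
case: (classic (forall y, in_E A e y -> leS S y d -> y = d)) => [Hm|].
  exists d; split; first by split.
  by split => //; rewrite subnn; case: HS.
move/not_all_ex_not => [y Hy].
have [Ey Hy'] := imply_to_and _ _ Hy.
have [Lyd Hyd] := imply_to_and _ _ Hy'.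
have Hyl : (y < d)%N by case: Lyd => H _; rewrite ltn_neqAle H andbT; apply/eqP.
have [a [Ma Lay]] := IH y (ltac:(lia)) Ey.
by exists a; split => //; apply: leS_trans Lay Lyd.
Qed.

Theorem lemma4p5 (S : pred nat) (A : seq nat) (e : nat -> int) :
  numerical_semigroup S ->
  (exists n : nat, ~~ S n) ->
  min_gen_set S A ->
  cyc_exp_seq S e ->
  (forall d : nat, in_E A e d -> (2 <= denumerant A d)%N) /\
  (forall alpha : nat, minimal_in_E S A e alpha ->
     e alpha = (denumerant A alpha)%:Z - 1).
Proof.
move=> HS HnN HA He; split.
- move=> d Ed.
  have [a [Ma [Had Sda]]] := exists_min HS Ed.
  have [Hden Sa] := minimal_val HS HnN HA He Ma.
  have Hpos := den_pos HA Sa.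
  have Hea : e a <> 0 by case: Ma => [[_ /eqP]].
  have H2 : (2 <= denumerant A a)%N by lia.
  apply: (leq_trans H2).
  by have := den_mono HA a Sda; rewrite subnKC.
- move=> a Ma; have [Hden _] := minimal_val HS HnN HA He Ma.
  by rewrite Hden addrK.
Qed.
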